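(* Let $G$ be a graph and $\mathcal{C}$ a min-max clique covering of $G$ that satisfies simple intersection. For a vertex $v\in V(G)$ and two distinct cliques $C_1,C_2\in\mathcal{C}$, we have $v\in C_1\cap C_2$ if and only if $N_G[v]=C_1\cup C_2$.
   Context: A clique covering of a graph is a set of cliques such that every edge lies in at least one of them; $\operatorname{cc}(G)$ is its minimum size. A min-max clique covering is a clique covering of size $\operatorname{cc}(G)$ consisting of maximal cliques; it has simple intersection if no three distinct cliques of it share a vertex. $N_G[v]$ is the closed neighbourhood $\{v\}\cup\{u:\{u,v\}\in E(G)\}$. *)

(* Defs.v *)
(* A (finite simple) graph on T : finType is a symmetric,
   irreflexive relation e : rel T (symmetry/irreflexivity are hypotheses of
   the theorem). *)
From mathcomp Require Import all_boot.
Set Implicit Arguments. Unset Strict Implicit. Unset Printing Implicit Defensive.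

Section Graph.
Variables (T : finType) (e : rel T).

Definition is_clique (C : {set T}) : bool :=
  [forall x in C, forall y in C, (x != y) ==> e x y].

Definition is_maximal_clique (C : {set T}) : Prop :=
  is_clique C /\ forall D : {set T}, is_clique D -> C \subset D -> D = C.

Definition is_clique_covering (P : {set {set T}}) : bool :=
  [forall C in P, is_clique C] &&
  [forall x, forall y, e x y ==> [exists C in P, (x \in C) && (y \in C)]].

(* cc(G): minimum size of a clique covering (#|{set T}| is an upper bound
   on the size of any family of vertex sets, used as neutral element). *)
Definition cc : nat :=
  \big[minn/#|{set T}|]_(P : {set {set T}} | is_clique_covering P) #|P|.

Definition is_minmax_clique_covering (P : {set {set T}}) : Prop :=
  is_clique_covering P /\ #|P| = cc /\
  (forall C, C \in P -> is_maximal_clique C).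

Definition simple_intersection (P : {set {set T}}) : Prop :=
  forall C1 C2 C3 v, C1 \in P -> C2 \in P -> C3 \in P ->
    C1 != C2 -> C1 != C3 -> C2 != C3 ->
    ~ (v \in C1 /\ v \in C2 /\ v \in C3).

Definition closed_nbhd (v : T) : {set T} := [set u | (u == v) || e v u].

End Graph.

(* Main.v *)
Require Import Defs.
From mathcomp Require Import all_boot.

Lemma cliqueP (T : finType) (e : rel T) C :
  is_clique e C -> forall x y, x \in C -> y \in C -> x != y -> e x y.
Proof.
move=> /forallP H x y xC yC nxy.
have /implyP /(_ xC) /forallP /(_ y) /implyP /(_ yC) /implyP := H x.
by apply.
Qed.

Lemma max_in_nbhd (T : finType) (e : rel T) (e_sym : symmetric e) C v :
  is_maximal_clique e C -> C \subset closed_nbhd e v -> v \in C.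
Proof.
move=> [cC mC] sub.
have adj : forall u, u \in C -> u != v -> e v u.
  move=> u uC nuv; have := subsetP sub u uC; rewrite inE.
  by case/orP=> [/eqP E|//]; rewrite E eqxx in nuv.
have cD : is_clique e (v |: C).
  apply/forallP=> x; apply/implyP=> xD; apply/forallP=> y; apply/implyP=> yD.
  apply/implyP=> nxy; rewrite !inE in xD yD.
  case/orP: xD => [/eqP Ex|xC]; case/orP: yD => [/eqP Ey|yC].
  - by rewrite Ex Ey eqxx in nxy.
  - by rewrite Ex; apply: adj => //; rewrite -Ex eq_sym.
  - by rewrite Ey e_sym; apply: adj => //; rewrite -Ey.
  - exact: (@cliqueP _ _ C cC x y xC yC nxy).
have E := mC _ cD (subsetUr _ _).
by rewrite -E setU11.
Qed.

Theorem mainTheorem16 (T : finType) (e : rel T)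
  (e_sym : symmetric e) (e_irr : irreflexive e)
  (P : {set {set T}})
  (HP : is_minmax_clique_covering e P) (Hsi : simple_intersection P)
  (v : T) (C1 C2 : {set T}) (HC1 : C1 \in P) (HC2 : C2 \in P) (Hne : C1 != C2) :
  v \in C1 :&: C2 <-> closed_nbhd e v = C1 :|: C2.
Proof.
case: HP => [/andP [/forallP Hcl /forallP Hcov] [_ Hmax]].
split.
- move=> /setIP [v1 v2]; apply/setP=> u; rewrite !inE; apply/idP/idP.
  + case/orP=> [/eqP->|evu]; first by rewrite v1.
    have /existsP [C /andP [CP /andP [vC uC]]] :=
      implyP (forallP (Hcov v) u) evu.
    case: (eqVneq C C1) => [E|n1]; first by rewrite -E uC.
    case: (eqVneq C C2) => [E|n2]; first by rewrite -E uC orbT.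
    exfalso; apply: (Hsi C1 C2 C v HC1 HC2 CP Hne) => //.
    * by rewrite eq_sym.
    * by rewrite eq_sym.
  + case: (eqVneq u v) => [->|nuv]; rewrite ?eqxx //= => /orP [uC|uC].
    * by apply: (@cliqueP _ _ _ (implyP (Hcl C1) HC1)) => //; rewrite eq_sym.
    * by apply: (@cliqueP _ _ _ (implyP (Hcl C2) HC2)) => //; rewrite eq_sym.
- move=> H; rewrite inE; apply/andP; split; apply: max_in_nbhd => //;
    try exact: Hmax; rewrite H.
  + exact: subsetUl.
  + exact: subsetUr.
Qed.
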